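(* Let $\tau>0$, let $\Gamma^0$ be a closed polyhedral surface with $\boldsymbol X^0\in[\mathbb K^0]^3$ the identity and $\mathcal H^0\in\mathbb K^0$ given. Suppose that for each $m\ge0$, $(\boldsymbol X^{m+1},V^{m+1},\mathcal H^{m+1})\in[\mathbb K^m]^3\times\mathbb K^m\times\mathbb K^m$ satisfies $$\Big(\tfrac{\boldsymbol X^{m+1}-\boldsymbol X^m}{\tau}\cdot\boldsymbol n^m,\phi^h\Big)^h_{\Gamma^m}=(V^{m+1},\phi^h)^h_{\Gamma^m}\quad\forall\phi^h\in\mathbb K^m,$$ $$(V^{m+1}\boldsymbol n^m,\boldsymbol\omega^h)^h_{\Gamma^m}=\Big\langle\mathcal H^{m+1}\mathbf A^m-\boldsymbol n^m(\nabla_\Gamma\mathcal H^{m+1})^T-\tfrac12(\mathcal H^{m+1})^2\nabla_\Gamma\boldsymbol X^{m+1},\nabla_\Gamma\boldsymbol\omega^h\Big\rangle^h_{\Gamma^m}\quad\forall\boldsymbol\omega^h\in[\mathbb K^m]^3,$$ $$(\mathcal H^{m+1}-\mathcal H^m,\varphi^h)^h_{\Gamma^m}=\big\langle\nabla_\Gamma(\boldsymbol X^{m+1}-\boldsymbol X^m),\boldsymbol n^m(\nabla_\Gamma\varphi^h)^T-\varphi^h\mathbf A^m\big\rangle^h_{\Gamma^m}\quad\forall\varphi^h\in\mathbb K^m,$$ and $\Gamma^{m+1}:=\boldsymbol X^{m+1}(\Gamma^m)$ is again a polyhedral surface with nondegenerate triangles. Then for every $\tau>0$ the discrete Willmore energy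 $W^m:=\frac12(\mathcal H^m,\mathcal H^m)^h_{\Gamma^m}$ satisfies $$W^{m+1}\le W^m\le W^0=\tfrac12(\mathcal H^0,\mathcal H^0)^h_{\Gamma^0}\qquad\forall m\ge0.$$
   Context: Polyhedral setting: $\Gamma^m=\bigcup_{j=1}^J\overline{\sigma_j^m}\subset\mathbb R^3$ is a closed polyhedral surface made of nonoverlapping nondegenerate triangles $\sigma_j^m$ with vertices $\boldsymbol q^m_{j_1},\boldsymbol q^m_{j_2},\boldsymbol q^m_{j_3}$, ordered so that $\mathcal J\{\sigma_j^m\}=(\boldsymbol q^m_{j_2}-\boldsymbol q^m_{j_1})\times(\boldsymbol q^m_{j_3}-\boldsymbol q^m_{j_1})$ points outward; $|\sigma_j^m|=\frac12|\mathcal J\{\sigma_j^m\}|$, and $\boldsymbol n^m|_{\sigma_j^m}=\mathcal J\{\sigma_j^m\}/|\mathcal J\{\sigma_j^m\}|$ (piecewise constant outward normal). $\mathbb K^m$ is the space of continuous functions on $\Gamma^m$ that are affine on each triangle. $\boldsymbol X^m\in[\mathbb K^m]^3$ is the identity on $\Gamma^m$; $\boldsymbol X^{m+1}\in[\mathbb K^m]^3$ parameterizes $\Gamma^{m+1}$ with triangles $\sigma_j^{m+1}=\boldsymbol X^{m+1}(\sigma_j^m)$ (same connectivity), so functions in $\mathbb K^m$ and $\mathbb K^{m+1}$ are identified through their vertex values. Discrete surface gradient on $\Gamma^m$: for a function $f$ with vertex values (equivalently its piecewise linear interpolant), on a triangle $\sigma=\{\boldsymbol q_1,\boldsymbol q_2,\boldsymbol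 q_3\}$ with normal $\boldsymbol n$, $$\nabla_\Gamma f|_\sigma=\frac{f(\boldsymbol q_1)(\boldsymbol q_2-\boldsymbol q_3)\times\boldsymbol n+f(\boldsymbol q_2)(\boldsymbol q_3-\boldsymbol q_1)\times\boldsymbol n+f(\boldsymbol q_3)(\boldsymbol q_1-\boldsymbol q_2)\times\boldsymbol n}{|\mathcal J\{\sigma\}|};$$ for vector functions $\nabla_\Gamma\boldsymbol f$ is the matrix with $i$-th row $(\nabla_\Gamma f_i)^T$. $\mathbf A^m=\nabla_\Gamma\boldsymbol w^m$ where $\boldsymbol w^m\in[\mathbb K^m]^3$ is a given (vertex unit normal) field. Mass-lumped inner products: for scalar/vector functions $u,v$ that are continuous on each closed triangle, $$(u,v)^h_{\Gamma^m}=\tfrac13\sum_{j=1}^J\sum_{k=1}^3|\sigma_j^m|\,u((\boldsymbol q^m_{j_k})^-)\cdot v((\boldsymbol q^m_{j_k})^-),$$ and for matrix functions $\langle\boldsymbol U,\boldsymbol V\rangle^h_{\Gamma^m}=\tfrac13\sum_j\sum_k|\sigma_j^m|\,\boldsymbol U((\boldsymbol q^m_{j_k})^-):\boldsymbol V((\boldsymbol q^m_{j_k})^-)$, where $g((\boldsymbol q)^-)$ is the limit of $g$ at vertex $\boldsymbol q$ from within $\sigma_j^m$, and $\boldsymbol U:\boldsymbol V=\mathrm{Tr}(\boldsymbol U^T\boldsymbol V)$. *)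

(* Defs.v *)
From HB Require Import structures.
From mathcomp Require Import all_boot all_order all_algebra.
From mathcomp Require Import reals.
Set Implicit Arguments.
Unset Strict Implicit.
Unset Printing Implicit Defensive.
Import Order.TTheory GRing.Theory Num.Theory.
Local Open Scope ring_scope.

Section Polyhedral.
Variable R : realType.

Definition vec3 := 'rV[R]_3.
Definition mat3 := 'M[R]_3.

Definition c0 : 'I_3 := @Ordinal 3 0 isT.
Definition c1 : 'I_3 := @Ordinal 3 1 isT.
Definition c2 : 'I_3 := @Ordinal 3 2 isT.

Definition ph_dot (u v : vec3) : R := \sum_(i < 3) u 0 i * v 0 i.
Definition ph_vnorm (u : vec3) : R := Num.sqrt (ph_dot u u).

Definition ph_cross (u v : vec3) : vec3 :=
  \row_(i < 3)
    (if i == c0 then u 0 c1 * v 0 c2 - u 0 c2 * v 0 c1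
     else if i == c1 then u 0 c2 * v 0 c0 - u 0 c0 * v 0 c2
     else u 0 c0 * v 0 c1 - u 0 c1 * v 0 c0).

Definition ph_frob (U V : mat3) : R := \tr (U^T *m V).

Definition ph_outer (a b : vec3) : mat3 := a^T *m b.

(* A triangulation with nV vertices and J triangles; triangle j has vertex
   indices tri j c0, tri j c1, tri j c2 (ordered: q_{j_1}, q_{j_2}, q_{j_3}).
   A polyhedral surface is given by the connectivity tri and vertex positions
   P : 'I_nV -> vec3.  Functions in K^m are given by their vertex values. *)
Variables (nV J : nat) (tri : 'I_J -> 'I_3 -> 'I_nV).

Definition ph_vtx (P : 'I_nV -> vec3) (j : 'I_J) (k : 'I_3) : vec3 := P (tri j k).

Definition ph_jac (P : 'I_nV -> vec3) (j : 'I_J) : vec3 :=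
  ph_cross (ph_vtx P j c1 - ph_vtx P j c0) (ph_vtx P j c2 - ph_vtx P j c0).

Definition ph_area (P : 'I_nV -> vec3) (j : 'I_J) : R := ph_vnorm (ph_jac P j) / 2.

Definition ph_normal (P : 'I_nV -> vec3) (j : 'I_J) : vec3 :=
  (ph_vnorm (ph_jac P j))^-1 *: ph_jac P j.

Definition ph_gradS (P : 'I_nV -> vec3) (f : 'I_nV -> R) (j : 'I_J) : vec3 :=
  let q1 := ph_vtx P j c0 in let q2 := ph_vtx P j c1 in let q3 := ph_vtx P j c2 in
  let n := ph_normal P j in
  (ph_vnorm (ph_jac P j))^-1 *:
    (f (tri j c0) *: ph_cross (q2 - q3) n + f (tri j c1) *: ph_cross (q3 - q1) n
     + f (tri j c2) *: ph_cross (q1 - q2) n).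

Definition ph_gradV (P : 'I_nV -> vec3) (F : 'I_nV -> vec3) (j : 'I_J) : mat3 :=
  \matrix_(i < 3, l < 3) (ph_gradS P (fun v => F v 0 i) j) 0 l.

(* mass-lumped inner products; a function that is continuous on each closed
   triangle is represented by g j k = its limit at vertex k of triangle j
   from within sigma_j *)
Definition ph_ip_s (P : 'I_nV -> vec3) (u v : 'I_J -> 'I_3 -> R) : R :=
  3^-1 * \sum_(j < J) \sum_(k < 3) ph_area P j * (u j k * v j k).
Definition ph_ip_v (P : 'I_nV -> vec3) (u v : 'I_J -> 'I_3 -> vec3) : R :=
  3^-1 * \sum_(j < J) \sum_(k < 3) ph_area P j * ph_dot (u j k) (v j k).
Definition ph_ip_m (P : 'I_nV -> vec3) (U V : 'I_J -> 'I_3 -> mat3) : R :=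
  3^-1 * \sum_(j < J) \sum_(k < 3) ph_area P j * ph_frob (U j k) (V j k).

Definition ph_lift_s (f : 'I_nV -> R) : 'I_J -> 'I_3 -> R := fun j k => f (tri j k).
Definition ph_lift_v (f : 'I_nV -> vec3) : 'I_J -> 'I_3 -> vec3 :=
  fun j k => f (tri j k).

(* closed surface (combinatorial part): every triangle has three distinct
   vertices, and every oriented edge (a,b) of a triangle is matched by exactly
   one triangle containing the oppositely oriented edge (b,a) *)
Definition ph_closed_mesh : Prop :=
  (forall j : 'I_J, injective (tri j)) /\
  (forall (j : 'I_J) (k : 'I_3),
     #|[set j' : 'I_J | [exists k' : 'I_3,
          (tri j' k' == tri j (ordS k)) && (tri j' (ordS k') == tri j k)]]| = 1%N).

Definition ph_nondegenerate (P : 'I_nV -> vec3) : Prop :=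
  forall j : 'I_J, ph_jac P j != 0.

Definition ph_willmore (P : 'I_nV -> vec3) (H : 'I_nV -> R) : R :=
  2^-1 * ph_ip_s P (ph_lift_s H) (ph_lift_s H).

(* the three equations of the scheme at step m, on Gamma^m with vertex
   positions Xm, A^m = grad_Gamma w^m *)
Definition ph_scheme_step (tau : R) (Xm : 'I_nV -> vec3) (wm : 'I_nV -> vec3)
  (Hm : 'I_nV -> R) (X1 : 'I_nV -> vec3) (V1 H1 : 'I_nV -> R) : Prop :=
  let A := ph_gradV Xm wm in
  let n := ph_normal Xm in
  (forall phi : 'I_nV -> R,
     ph_ip_s Xm (fun j k => ph_dot (tau^-1 *: (X1 (tri j k) - Xm (tri j k))) (n j))
             (ph_lift_s phi)
     = ph_ip_s Xm (ph_lift_s V1) (ph_lift_s phi)) /\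
  (forall om : 'I_nV -> vec3,
     ph_ip_v Xm (fun j k => V1 (tri j k) *: n j) (ph_lift_v om)
     = ph_ip_m Xm (fun j k => H1 (tri j k) *: A j - ph_outer (n j) (ph_gradS Xm H1 j)
                            - (2^-1 * H1 (tri j k) ^+ 2) *: ph_gradV Xm X1 j)
               (fun j k => ph_gradV Xm om j)) /\
  (forall vphi : 'I_nV -> R,
     ph_ip_s Xm (ph_lift_s (fun v => H1 v - Hm v)) (ph_lift_s vphi)
     = ph_ip_m Xm (fun j k => ph_gradV Xm (fun v => X1 v - Xm v) j)
               (fun j k => ph_outer (n j) (ph_gradS Xm vphi j)
                           - vphi (tri j k) *: A j)).

End Polyhedral.

(* Main.v *)
Require Import Defs.
From HB Require Import structures.
From mathcomp Require Import all_boot all_order all_algebra.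
From mathcomp Require Import reals.
From mathcomp Require Import ring lra.
Import Order.TTheory GRing.Theory Num.Theory.
Local Open Scope ring_scope.


Section Aux.
Variable R : realType.
Lemma o0 : (ord0 : 'I_3) = c0. Proof. exact: val_inj. Qed.
Lemma o1 : (lift ord0 ord0 : 'I_3) = c1. Proof. exact: val_inj. Qed.
Lemma o2 : (lift ord0 (lift ord0 ord0) : 'I_3) = c2. Proof. exact: val_inj. Qed.
Lemma sum3 (F : 'I_3 -> R) : \sum_(i < 3) F i = F c0 + F c1 + F c2.
Proof. by rewrite !big_ord_recl big_ord0 addr0 addrA o2 o1 o0. Qed.
Lemma dotE (u v : vec3 R) : ph_dot u v = u 0 c0 * v 0 c0 + u 0 c1 * v 0 c1 + u 0 c2 * v 0 c2.
Proof. by rewrite /ph_dot sum3. Qed.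
Lemma frobE (U V : mat3 R) : ph_frob U V = \sum_(i < 3) \sum_(l < 3) U i l * V i l.
Proof.
rewrite /ph_frob /mxtrace exchange_big /=; apply: eq_bigr => l _.
rewrite mxE; apply: eq_bigr => i _; by rewrite mxE.
Qed.
Lemma frob9 (U V : mat3 R) : ph_frob U V =
  U c0 c0 * V c0 c0 + U c0 c1 * V c0 c1 + U c0 c2 * V c0 c2 +
  (U c1 c0 * V c1 c0 + U c1 c1 * V c1 c1 + U c1 c2 * V c1 c2) +
  (U c2 c0 * V c2 c0 + U c2 c1 * V c2 c1 + U c2 c2 * V c2 c2).
Proof. by rewrite frobE !sum3. Qed.
Lemma frob_key (A O G D : mat3 R) (h c : R) :
  ph_frob (h *: A - O - c *: G) D + ph_frob D (O - h *: A) = - c * ph_frob G D.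
Proof. rewrite !frob9 !mxE; ring. Qed.
Lemma dotZZ k (x y : vec3 R) : ph_dot (k *: x) (k *: y) = k ^+ 2 * ph_dot x y.
Proof. rewrite !dotE !mxE; ring. Qed.
Lemma dotZl k (x y : vec3 R) : ph_dot (k *: x) y = k * ph_dot x y.
Proof. rewrite !dotE !mxE; ring. Qed.
Lemma dotC (x y : vec3 R) : ph_dot x y = ph_dot y x.
Proof. rewrite !dotE; ring. Qed.
Lemma dot_cross (a b c d : vec3 R) :
  ph_dot (ph_cross a b) (ph_cross c d) = ph_dot a c * ph_dot b d - ph_dot a d * ph_dot b c.
Proof. rewrite !dotE !mxE /=; ring. Qed.
Lemma dot_ge0 (x : vec3 R) : 0 <= ph_dot x x.
Proof. rewrite dotE -!expr2; apply: addr_ge0; [apply: addr_ge0|]; exact: sqr_ge0. Qed.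
Lemma dot_eq0 (x : vec3 R) : ph_dot x x = 0 -> x = 0.
Proof.
rewrite dotE -!expr2 => h.
have h0 := sqr_ge0 (x 0 c0); have h1 := sqr_ge0 (x 0 c1); have h2 := sqr_ge0 (x 0 c2).
have e0 : x 0 c0 ^+ 2 = 0 by lra.
have e1 : x 0 c1 ^+ 2 = 0 by lra.
have e2 : x 0 c2 ^+ 2 = 0 by lra.
apply/rowP => i; rewrite mxE.
have [->|[->|->]] : i = c0 \/ i = c1 \/ i = c2.
  case: i => [[|[|[|i]]] Hi]; [left|right;left|right;right|by []]; exact: val_inj.
- by apply/eqP; rewrite -sqrf_eq0 e0.
- by apply/eqP; rewrite -sqrf_eq0 e1.
- by apply/eqP; rewrite -sqrf_eq0 e2.
Qed.
End Aux.

Set Implicit Arguments. Unset Strict Implicit.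


Lemma key_ineq (R : realType) (a b c p q r d E T Poly : R) :
  (0 <= a) -> (0 <= c) -> (d = a*c - b^+2) -> (0 < d) -> (E = p*r - q^+2) -> (0 <= E) ->
  (T = c * p - 2*b*q + a*r) -> (0 <= T) -> (T <= 2*d + 2*Poly) ->
  Num.sqrt E / 2 <= Num.sqrt d / 2 * (1 + d^-1 * Poly).
Proof.
move=> ha hc hd dpos hE E0 hT T0 hTP.
have apos : 0 < a.
  rewrite lt_def ha andbT; apply/eqP => a0; move: dpos; rewrite hd a0 mul0r sub0r oppr_gt0.
  by rewrite ltNge sqr_ge0.
have key : a^+2 * (T^+2 - 4*d*E) = (a*(a*r - c * p) - 2*b*(a*q - b * p))^+2 + 4*(a*c-b^+2)*(a*q - b * p)^+2.
  by rewrite hT hd hE; ring.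
have h4 : 4*d*E <= T^+2.
  rewrite -subr_ge0; have : 0 <= a^+2 * (T^+2 - 4*d*E).
    rewrite key -hd; apply: addr_ge0; first exact: sqr_ge0.
    by apply: mulr_ge0; [apply: mulr_ge0; [lra|exact: ltW]|exact: sqr_ge0].
  by rewrite pmulr_rge0 // exprn_gt0.
have hs : Num.sqrt d * Num.sqrt E <= T / 2.
  rewrite -sqrtrM; last exact: ltW.
  have -> : T / 2 = Num.sqrt ((T/2)^+2) by rewrite sqrtr_sqr ger0_norm //; lra.
  apply: ler_wsqrtr; lra.
have s2 : Num.sqrt d ^+ 2 = d by rewrite sqr_sqrtr // ltW.
have spos : 0 < Num.sqrt d by rewrite sqrtr_gt0.
move: hs s2 spos; move: (Num.sqrt d) => s hs s2 spos.
rewrite -s2.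
have -> : s / 2 * (1 + (s ^+ 2)^-1 * Poly) =
  Num.sqrt E / 2 + (s^+2 + Poly - s * Num.sqrt E) / (2 * s).
  by field; rewrite gt_eqF.
rewrite lerDl; apply: divr_ge0; last lra.
rewrite s2; lra.
Qed.

Section Grad.
Variable R : realType.
Variables (nV J : nat) (tri : 'I_J -> 'I_3 -> 'I_nV).

Definition wv (P : 'I_nV -> vec3 R) (f : 'I_nV -> R) j : vec3 R :=
  f (tri j c0) *: (P (tri j c1) - P (tri j c2)) + f (tri j c1) *: (P (tri j c2) - P (tri j c0))
  + f (tri j c2) *: (P (tri j c0) - P (tri j c1)).

Lemma ord3 (i : 'I_3) : i = c0 \/ i = c1 \/ i = c2.
Proof. case: i => [[|[|[|i]]] Hi]; [left|right;left|right;right|by []]; exact: val_inj. Qed.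

Lemma gradS_cross P f j : ph_gradS tri P f j =
  ((ph_vnorm (ph_jac tri P j))^-1 ^+ 2) *: ph_cross (wv P f j) (ph_jac tri P j).
Proof.
apply/rowP => i; rewrite /ph_gradS /ph_normal /wv /ph_jac /ph_vtx.
have [->|[->|->]] := ord3 i; rewrite !mxE /=; ring.
Qed.

Lemma dot_wJ P f j : ph_dot (wv P f j) (ph_jac tri P j) = 0.
Proof. rewrite dotE /wv /ph_jac /ph_vtx !mxE /=; ring. Qed.

Lemma gradS_dot P f g j : ph_jac tri P j != 0 ->
  ph_dot (ph_gradS tri P f j) (ph_gradS tri P g j) =
  (ph_dot (ph_jac tri P j) (ph_jac tri P j))^-1 * ph_dot (wv P f j) (wv P g j).
Proof.
move=> hJ; rewrite !gradS_cross dotZZ dot_cross (@dotC R (ph_jac tri P j) (wv P g j)) !dot_wJ mulr0 subr0.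
rewrite /ph_vnorm; set d := ph_dot _ _.
have d0 : 0 <= d by exact: dot_ge0.
have dn0 : d != 0 by apply/eqP => /dot_eq0 h; move/eqP: hJ; apply.
have s2 : Num.sqrt d ^+ 2 = d by rewrite sqr_sqrtr.
have sn0 : Num.sqrt d != 0 by rewrite sqrtr_eq0 -ltNge lt_def dn0 d0.
clearbody d; move: s2 sn0; rewrite /ph_vnorm -/d; move: (Num.sqrt d : R) => s s2 sn0.
rewrite -s2; move: (ph_dot (wv P f j) (wv P g j)) => x; clear -sn0.
field. exact: sn0.
Qed.

Lemma gradVE P (F : 'I_nV -> vec3 R) j i l :
  ph_gradV tri P F j i l = ph_gradS tri P (fun v => F v 0 i) j 0 l.
Proof. by rewrite /ph_gradV mxE. Qed.

Lemma frob_rows P (F F' : 'I_nV -> vec3 R) j :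
  ph_frob (ph_gradV tri P F j) (ph_gradV tri P F' j) =
  ph_dot (ph_gradS tri P (fun v => F v 0 c0) j) (ph_gradS tri P (fun v => F' v 0 c0) j) +
  ph_dot (ph_gradS tri P (fun v => F v 0 c1) j) (ph_gradS tri P (fun v => F' v 0 c1) j) +
  ph_dot (ph_gradS tri P (fun v => F v 0 c2) j) (ph_gradS tri P (fun v => F' v 0 c2) j).
Proof. rewrite frob9 !dotE. by rewrite !gradVE. Qed.

End Grad.

Unset Implicit Arguments.

Section G2.
Variable R : realType.
Variables (nV J : nat) (tri : 'I_J -> 'I_3 -> 'I_nV).
Lemma geom (P Q : 'I_nV -> vec3 R) j : ph_jac tri P j != 0 ->
  ph_area tri Q j <= ph_area tri P j *
    (1 + ph_frob (ph_gradV tri P Q j) (ph_gradV tri P (fun v => Q v - P v) j)).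
Proof.
move=> hJ.
rewrite frob_rows !gradS_dot // -!mulrDr /ph_area /ph_vnorm.
have dn0 : ph_dot (ph_jac tri P j) (ph_jac tri P j) != 0.
  by apply/eqP => /dot_eq0 h; move/eqP: hJ; apply.
set e1 := P (tri j c1) - P (tri j c0).
set e2 := P (tri j c2) - P (tri j c0).
set f1 := Q (tri j c1) - Q (tri j c0).
set f2 := Q (tri j c2) - Q (tri j c0).
set w0 := wv tri P (fun v => Q v 0 c0) j.
set w1 := wv tri P (fun v => Q v 0 c1) j.
set w2 := wv tri P (fun v => Q v 0 c2) j.
set z0 := wv tri P (fun v => (Q v - P v) 0 c0) j.
set z1 := wv tri P (fun v => (Q v - P v) 0 c1) j.
set z2 := wv tri P (fun v => (Q v - P v) 0 c2) j.
apply: (@key_ineq R (ph_dot e1 e1) (ph_dot e1 e2) (ph_dot e2 e2)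
   (ph_dot f1 f1) (ph_dot f1 f2) (ph_dot f2 f2) _ _
   (ph_dot w0 w0 + ph_dot w1 w1 + ph_dot w2 w2)).
- exact: dot_ge0.
- exact: dot_ge0.
- by rewrite /ph_jac /ph_vtx dot_cross -/e1 -/e2 (@dotC R e2 e1) expr2.
- by rewrite lt_def dn0 dot_ge0.
- by rewrite /ph_jac /ph_vtx dot_cross -/f1 -/f2 (@dotC R f2 f1) expr2.
- exact: dot_ge0.
- rewrite /w0 /w1 /w2 /e1 /e2 /f1 /f2 !dotE /wv !mxE /=; ring.
- by apply: addr_ge0; [apply: addr_ge0|]; exact: dot_ge0.
- rewrite -subr_ge0.
  have -> : 2 * ph_dot (ph_jac tri P j) (ph_jac tri P j) +
     2 * (ph_dot w0 z0 + ph_dot w1 z1 + ph_dot w2 z2) -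
     (ph_dot w0 w0 + ph_dot w1 w1 + ph_dot w2 w2) =
     ph_dot z0 z0 + ph_dot z1 z1 + ph_dot z2 z2.
    rewrite /w0 /w1 /w2 /z0 /z1 /z2 /ph_jac /ph_vtx !dotE /wv !mxE /=; ring.
  by apply: addr_ge0; [apply: addr_ge0|]; exact: dot_ge0.
Qed.
End G2.

Set Implicit Arguments. Unset Strict Implicit.

Section Step.
Variable R : realType.
Variables (nV J : nat) (tri : 'I_J -> 'I_3 -> 'I_nV).

Lemma combine (Z F1 G1 F2 G2 F3 G3 : 'I_J -> 'I_3 -> R) (x y : R) :
  \sum_(j < J) \sum_(k < 3) F1 j k = \sum_(j < J) \sum_(k < 3) G1 j k ->
  \sum_(j < J) \sum_(k < 3) F2 j k = \sum_(j < J) \sum_(k < 3) G2 j k ->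
  \sum_(j < J) \sum_(k < 3) F3 j k = \sum_(j < J) \sum_(k < 3) G3 j k ->
  (forall j k, Z j k = x * (F1 j k - G1 j k) + y * (F2 j k - G2 j k) + x * (F3 j k - G3 j k)) ->
  \sum_(j < J) \sum_(k < 3) Z j k = 0.
Proof.
move=> h1 h2 h3 hZ.
have -> : \sum_(j < J) \sum_(k < 3) Z j k =
   x * (\sum_(j < J) \sum_(k < 3) F1 j k - \sum_(j < J) \sum_(k < 3) G1 j k) +
   y * (\sum_(j < J) \sum_(k < 3) F2 j k - \sum_(j < J) \sum_(k < 3) G2 j k) +
   x * (\sum_(j < J) \sum_(k < 3) F3 j k - \sum_(j < J) \sum_(k < 3) G3 j k).
  rewrite -!sumrB !mulr_sumr -!big_split; apply: eq_bigr => j _ /=.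
  rewrite -!sumrB !mulr_sumr -!big_split; apply: eq_bigr => k _ /=; exact: hZ.
by rewrite h1 h2 h3 !subrr !mulr0 !addr0.
Qed.

Lemma area_ge0 (P : 'I_nV -> vec3 R) j : 0 <= ph_area tri P j.
Proof. by rewrite /ph_area divr_ge0 // sqrtr_ge0. Qed.

Lemma step (tau : R) (Xm wm X1 : 'I_nV -> vec3 R) (Hm H1 V1 : 'I_nV -> R) :
  0 < tau -> ph_nondegenerate tri Xm -> ph_scheme_step tri tau Xm wm Hm X1 V1 H1 ->
  ph_willmore tri X1 H1 <= ph_willmore tri Xm Hm.
Proof.
move=> tau0 nd [E1 [E2 E3]].
have i3 : (3:R)^-1 != 0 by rewrite invr_eq0 pnatr_eq0.
have tn0 : tau != 0 by rewrite gt_eqF.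
move: (E1 V1) (E2 (fun v => X1 v - Xm v)) (E3 H1).
rewrite /ph_ip_s /ph_ip_v /ph_ip_m /ph_lift_s /ph_lift_v => /(mulfI i3) e1 /(mulfI i3) e2 /(mulfI i3) e3.
set fr := fun j => ph_frob (ph_gradV tri Xm X1 j) (ph_gradV tri Xm (fun v => X1 v - Xm v) j).
have Zs : \sum_(j < J) \sum_(k < 3) ph_area tri Xm j *
   (2 * (H1 (tri j k) ^+ 2 - H1 (tri j k) * Hm (tri j k)) + 2 * tau * V1 (tri j k) ^+ 2
    + H1 (tri j k) ^+ 2 * fr j) = 0.
  apply: (combine (x := 2) (y := 2 * tau) e3 (esym e1) e2) => j k /=.
  have fk := @frob_key R (ph_gradV tri Xm wm j) (ph_outer (ph_normal tri Xm j) (ph_gradS tri Xm H1 j))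
     (ph_gradV tri Xm X1 j) (ph_gradV tri Xm (fun v => X1 v - Xm v) j) (H1 (tri j k)) (2^-1 * H1 (tri j k) ^+ 2).
  move: fk; set f2 := ph_frob _ (ph_gradV tri Xm (fun v => X1 v - Xm v) j); set f3 := ph_frob (ph_gradV tri Xm (fun v => X1 v - Xm v) j) _.
  move=> fk.
  have frj : fr j = ph_frob (ph_gradV tri Xm X1 j) (ph_gradV tri Xm (fun v => X1 v - Xm v) j) by [].
  rewrite -frj in fk; clearbody f2 f3.
  have -> : f2 = - (2^-1 * H1 (tri j k) ^+ 2) * fr j - f3 by rewrite -fk; ring.
  have d1 : ph_dot (V1 (tri j k) *: ph_normal tri Xm j) (X1 (tri j k) - Xm (tri j k)) =
     V1 (tri j k) * ph_dot (X1 (tri j k) - Xm (tri j k)) (ph_normal tri Xm j).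
    by rewrite (@dotZl R) (@dotC R (ph_normal tri Xm j)).
  have d2 : ph_dot (tau^-1 *: (X1 (tri j k) - Xm (tri j k))) (ph_normal tri Xm j) =
     tau^-1 * ph_dot (X1 (tri j k) - Xm (tri j k)) (ph_normal tri Xm j).
    by rewrite (@dotZl R).
  rewrite d1 d2.
  move: (ph_dot (X1 (tri j k) - Xm (tri j k)) (ph_normal tri Xm j)) => dd.
  move: (fr j) (ph_area tri Xm j) => fj aj; clear -tn0.
  field; exact: tn0.
rewrite /ph_willmore /ph_ip_s /ph_lift_s.
apply: ler_wpM2l; first by rewrite invr_ge0.
apply: ler_wpM2l; first by rewrite invr_ge0.
apply: (@le_trans _ _ (\sum_(j < J) \sum_(k < 3) (ph_area tri Xm j * (Hm (tri j k) * Hm (tri j k)) +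
   ph_area tri Xm j *
   (2 * (H1 (tri j k) ^+ 2 - H1 (tri j k) * Hm (tri j k)) + 2 * tau * V1 (tri j k) ^+ 2
    + H1 (tri j k) ^+ 2 * fr j)))).
  apply: ler_sum => j _; apply: ler_sum => k _.
  have g := @geom _ _ _ tri Xm X1 j (nd j).
  have hh : 0 <= H1 (tri j k) * H1 (tri j k) by rewrite -expr2 sqr_ge0.
  apply: (@le_trans _ _ (ph_area tri Xm j * (1 + fr j) * (H1 (tri j k) * H1 (tri j k)))).
    exact: ler_wpM2r.
  rewrite -subr_ge0.
  have -> : ph_area tri Xm j * (Hm (tri j k) * Hm (tri j k)) +
    ph_area tri Xm j * (2 * (H1 (tri j k) ^+ 2 - H1 (tri j k) * Hm (tri j k)) +
     2 * tau * V1 (tri j k) ^+ 2 + H1 (tri j k) ^+ 2 * fr j) -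
    ph_area tri Xm j * (1 + fr j) * (H1 (tri j k) * H1 (tri j k)) =
    ph_area tri Xm j * ((H1 (tri j k) - Hm (tri j k)) ^+ 2 + 2 * tau * V1 (tri j k) ^+ 2).
    rewrite /fr; move: (ph_frob _ _) (ph_area tri Xm j) => a b; ring.
  apply: mulr_ge0; first exact: area_ge0.
  apply: addr_ge0; first exact: sqr_ge0.
  by apply: mulr_ge0; [apply: mulr_ge0; [|exact: ltW]|exact: sqr_ge0].
rewrite (eq_bigr (fun j => \sum_(k < 3) ph_area tri Xm j * (Hm (tri j k) * Hm (tri j k)) +
   \sum_(k < 3) ph_area tri Xm j *
   (2 * (H1 (tri j k) ^+ 2 - H1 (tri j k) * Hm (tri j k)) + 2 * tau * V1 (tri j k) ^+ 2
    + H1 (tri j k) ^+ 2 * fr j))); last by move=> j _; rewrite big_split.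
by rewrite big_split /= Zs addr0.
Qed.
End Step.

Unset Implicit Arguments.
Theorem theorem3p1 (R : realType) (nV J : nat) (tri : 'I_J -> 'I_3 -> 'I_nV)
  (tau : R) (X : nat -> 'I_nV -> vec3 R) (V H : nat -> 'I_nV -> R)
  (w : nat -> 'I_nV -> vec3 R) :
  0 < tau ->
  ph_closed_mesh tri ->
  (forall m : nat, ph_nondegenerate tri (X m)) ->
  (forall m : nat,
     ph_scheme_step tri tau (X m) (w m) (H m) (X m.+1) (V m.+1) (H m.+1)) ->
  forall m : nat,
    ph_willmore tri (X m.+1) (H m.+1) <= ph_willmore tri (X m) (H m) /\
    ph_willmore tri (X m) (H m) <= ph_willmore tri (X 0%N) (H 0%N).

Proof.
move=> tau0 _ nd st m.
have stp : forall k : nat, ph_willmore tri (X k.+1) (H k.+1) <= ph_willmore tri (X k) (H k).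
  move=> k; exact: (step tau0 (nd k) (st k)).
split; first exact: stp.
elim: m => [|m IH]; first exact: lexx.
exact: le_trans (stp m) IH.
Qed.
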